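(* There is no integral quadruple $(a,b,c,d)$ with $c>b>a\ge2$ and $d\ge3$ satisfying \[\frac{1}{a}+\frac{1}{b}+\frac{1}{c}+\frac{d+1}{2d}=2+\frac{1}{abcd}.\] *)

(* Defs.v *)
From mathcomp Require Import all_boot all_order all_algebra.

(* Main.v *)
Require Import Defs.
From mathcomp Require Import all_boot all_order all_algebra.
From mathcomp Require Import zify ring lra.
Import Order.TTheory GRing.Theory Num.Theory.
Local Open Scope ring_scope.

Lemma inv_le (x k : rat) : 0 < k -> k <= x -> x^-1 <= k^-1.
Proof.
move=> k0 kx; have x0 : 0 < x by apply: lt_le_trans kx.
by rewrite lef_pV2 ?posrE.
Qed.

Lemma cast_ge (n : int) (k : nat) : (k%:Z <= n)%R -> (k%:R : rat) <= n%:~R.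
Proof. by move=> h; rewrite -[k%:R]/((k%:Z)%:~R) ler_int. Qed.

Theorem proposition3p2 :
  ~ exists a b c d : int,
      [/\ (2 <= a)%R, (a < b)%R, (b < c)%R, (3 <= d)%R &
        (a%:~R^-1 + b%:~R^-1 + c%:~R^-1 + (d + 1)%:~R / (2 * d)%:~R : rat)
          = 2 + (a * b * c * d)%:~R^-1].
Proof.
case=> a [b [c [d [ha hab hbc hd E]]]].
have hb : (3%:Z <= b)%R by lia.
have hc : (4%:Z <= c)%R by lia.
have ha' : (2%:R : rat) <= a%:~R by apply: cast_ge.
have hb' : (3%:R : rat) <= b%:~R by apply: cast_ge.
have hc' : (4%:R : rat) <= c%:~R by apply: cast_ge.
have hd' : (3%:R : rat) <= d%:~R by apply: cast_ge.
move: E; rewrite intrD intrM !intrM.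
set x := a%:~R; set y := b%:~R; set z := c%:~R; set w := d%:~R.
move=> E.
have h1 : x^-1 <= 2^-1 by apply: inv_le.
have h2 : y^-1 <= 3^-1 by apply: inv_le.
have h3 : z^-1 <= 4^-1 by apply: inv_le.
have h4 : w^-1 <= 3^-1 by apply: inv_le.
have x0 : 0 < x by apply: lt_le_trans ha'.
have y0 : 0 < y by apply: lt_le_trans hb'.
have z0 : 0 < z by apply: lt_le_trans hc'.
have w0 : 0 < w by apply: lt_le_trans hd'.
have p0 : 0 < (x*y*z*w)^-1 by rewrite invr_gt0 !mulr_gt0.
have ew : (w + 1%:~R) / (2%:~R * w) = 2^-1 + 2^-1 * w^-1.
  by rewrite /= ; field; rewrite gt_eqF.
rewrite ew in E.
have : x^-1 + y^-1 + z^-1 + (2^-1 + 2^-1 * w^-1) <= 2^-1 + 3^-1 + 4^-1 + (2^-1 + 2^-1 * 3^-1).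
  lra.
rewrite E. move: p0; lra.
Qed.
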